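(* Let $X$ be a stacked simplicial complex of dimension $d$, let $h,k$ be faces of $X$ such that $h\cup k$ is not contained in any codimension one face, and let $h\,|\,f_1,\dots,f_p\,|\,k$ be a path between $h$ and $k$. Then for every $1\le i<p$ we have $h\not\subseteq f_i\cap f_{i+1}$ and $k\not\subseteq f_i\cap f_{i+1}$.
   Context: A simplicial complex $X$ on a finite vertex set $V$ is a family of subsets (faces) of $V$ closed under taking subsets, every element of $V$ lying in some face; facets are inclusion-maximal faces. $X$ is pure of dimension $d$ if every facet has $d+1$ elements; a codimension one face is a face with $d$ elements. $X$ is stacked if it is pure of some dimension $d$ and its facets can be ordered $F_0,F_1,\dots,F_k$ (a stacking order) such that for each $p\ge 1$, $F_p$ contains exactly one vertex $v_p$ not in $F_0\cup\dots\cup F_{p-1}$ (called the free vertex of $F_p$), and $F_p\setminus\{v_p\}\subseteq F_j$ for some $j<p$. A walk is a sequence of facets $f_1,\dots,f_p$ ($p\ge 1$) such that each $f_i\cap f_{i+1}$ has exactly $d$ elements; a path is a walk in which the faces $f_i\cap f_{i+1}$, $1\le i<p$, are pairwise distinct. For faces $h,k$ such that $h\cup k$ is not contained in any codimension one face, a path between $h$ and $k$, written $h\,|\,f_1,\dots,f_p\,|\,k$, is a path $f_1,\dots,f_p$ with $h\subseteq f_1$, $k\subseteq f_p$, and, if $p\ge 2$, $h\not\subseteq f_1\cap f_2$ and $k\not\subseteq f_p\cap f_{p-1}$. For a vertex $v$ one writes $v$ for $\{v\}$. *)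

(* Defs.v *)
From mathcomp Require Import all_boot.
Set Implicit Arguments. Unset Strict Implicit. Unset Printing Implicit Defensive.

Section SC.
Variable V : finType.

Definition is_complex (X : {set {set V}}) : Prop :=
  (forall F G : {set V}, F \in X -> G \subset F -> G \in X) /\
  (forall v : V, exists2 F, F \in X & v \in F).

Definition facet (X : {set {set V}}) (F : {set V}) : Prop :=
  F \in X /\ (forall G, G \in X -> F \subset G -> G = F).

Definition pure (X : {set {set V}}) (d : nat) : Prop :=
  forall F, facet X F -> #|F| = d.+1.

Definition codim1_face (X : {set {set V}}) (d : nat) (c : {set V}) : Prop :=
  c \in X /\ #|c| = d.

Definition stacking_order (X : {set {set V}}) (s : seq {set V}) : Prop :=
  s != [::] /\ uniq s /\ (forall F, F \in s <-> facet X F) /\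
  forall p, 0 < p < size s ->
    exists v : V,
      [set x in nth set0 s p | x \notin \bigcup_(j < p) nth set0 s j] = [set v] /\
      exists2 j, j < p & nth set0 s p :\ v \subset nth set0 s j.

Definition stacked (X : {set {set V}}) (d : nat) : Prop :=
  is_complex X /\ pure X d /\ exists s, stacking_order X s.

Definition sc_walk (X : {set {set V}}) (d : nat) (f : seq {set V}) : Prop :=
  f != [::] /\ (forall F, F \in f -> facet X F) /\
  forall i, i.+1 < size f -> #|nth set0 f i :&: nth set0 f i.+1| = d.

Definition consec_inters (f : seq {set V}) : seq {set V} :=
  mkseq (fun i => nth set0 f i :&: nth set0 f i.+1) (size f).-1.

Definition sc_path (X : {set {set V}}) (d : nat) (f : seq {set V}) : Prop :=
  sc_walk X d f /\ uniq (consec_inters f).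

Definition path_between (X : {set {set V}}) (d : nat) (h k : {set V})
    (f : seq {set V}) : Prop :=
  sc_path X d f /\ h \subset nth set0 f 0 /\ k \subset nth set0 f (size f).-1 /\
  (1 < size f ->
     ~~ (h \subset nth set0 f 0 :&: nth set0 f 1) /\
     ~~ (k \subset nth set0 f (size f).-1 :&: nth set0 f (size f).-2)).

End SC.

(* Main.v *)
Require Import Defs.
From mathcomp Require Import all_boot.
From mathcomp Require Import zify.
Set Implicit Arguments. Unset Strict Implicit.

Section Aux.
Variable V : finType.
Variable s : seq {set V}.
Variable d : nat.
Hypothesis Hs : forall F, F \in s -> #|F| = d.+1.
Hypothesis Hst : forall p, 0 < p < size s ->
    exists v : V,
      [set x in nth set0 s p | x \notin \bigcup_(j < p) nth set0 s j] = [set v] /\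
      exists2 j, j < p & nth set0 s p :\ v \subset nth set0 s j.

Lemma L0 (A B : {set V}) : A \in s -> B \in s -> index A s < index B s ->
  exists v, [/\ v \in B, #|B :\ v| = d &
    forall A', A' \in s -> index A' s < index B s -> v \notin A'].
Proof.
move=> As Bs lt.
have Bi : index B s < size s by rewrite index_mem.
have [v [Hv _]] : exists v : V,
      [set x in nth set0 s (index B s) | x \notin \bigcup_(j < index B s) nth set0 s j] = [set v] /\
      exists2 j, j < index B s & nth set0 s (index B s) :\ v \subset nth set0 s j.
  by apply: Hst; apply/andP; split => //; apply: leq_ltn_trans lt.
have : v \in [set v] by rewrite in_set1.
rewrite -Hv inE nth_index // => /andP [vB vnot].
exists v; split => //.
  by have := cardsD1 v B; rewrite vB Hs //; lia.
move=> A' A's ltA'; apply: contra vnot => vA'.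
apply/bigcupP; exists (Ordinal ltA') => //=.
by rewrite nth_index.
Qed.

Lemma Lpar (A B : {set V}) : A \in s -> B \in s -> index A s < index B s ->
  #|A :&: B| = d ->
  exists v, [/\ v \in B, A :&: B = B :\ v &
    forall A', A' \in s -> index A' s < index B s -> v \notin A'].
Proof.
move=> As Bs lt cAB.
have [v [vB cv Hv]] := @L0 A B As Bs lt.
exists v; split => //.
apply/eqP; rewrite eqEcard cAB cv leqnn andbT.
apply/subsetP => x; rewrite !inE => /andP [xA xB]; rewrite xB andbT.
apply/eqP => exv; move: (Hv A As lt); rewrite -exv xA //.
Qed.

Lemma L1 (A C B : {set V}) : A \in s -> C \in s -> B \in s ->
  index A s < index B s -> index C s < index B s ->
  #|A :&: B| = d -> #|C :&: B| = d -> A :&: B = C :&: B.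
Proof.
move=> As Cs Bs ltA ltC cA cC.
have [v [vB eA Hv]] := @Lpar A B As Bs ltA cA.
have [w [wB eC Hw]] := @Lpar C B Cs Bs ltC cC.
rewrite eA eC.
have wA : w \notin A by apply: Hw.
have : w \notin A :&: B by rewrite inE (negbTE wA).
rewrite eA !inE wB andbT negbK => /eqP ->.
by [].
Qed.

Lemma L2 (A A' B : {set V}) (x : V) : A \in s -> A' \in s -> B \in s ->
  index A s < index B s -> index A' s < index B s ->
  #|A :&: B| = d -> x \in A' -> x \in B -> x \in A.
Proof.
move=> As A's Bs ltA ltA' cA xA' xB.
have [v [vB eA Hv]] := @Lpar A B As Bs ltA cA.
have : x \in A :&: B.
  rewrite eA !inE xB andbT; apply/eqP => xv.
  by move: (Hv A' A's ltA'); rewrite -xv xA'.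
by rewrite inE => /andP [].
Qed.

Variable g : nat -> {set V}.
Variable n : nat.
Hypothesis Hg : forall {j}, j < n -> g j \in s.
Hypothesis Hw : forall {j}, j.+1 < n -> #|g j :&: g j.+1| = d.
Hypothesis Hu : forall j l, j < l -> l.+1 < n -> g j :&: g j.+1 != g l :&: g l.+1.

Let sg j := index (g j) s.

Lemma sg_inj j l : j < n -> l < n -> sg j = sg l -> g j = g l.
Proof.
move=> jn ln e; rewrite -(nth_index set0 (Hg jn)) -(nth_index set0 (Hg ln)).
by rewrite /sg in e; rewrite e.
Qed.

Lemma sg_neq j : j.+1 < n -> sg j != sg j.+1.
Proof.
move=> jn; apply/eqP => e.
have e' := sg_inj (ltnW jn) jn e.
have := Hw jn; rewrite e' setIid Hs; last by apply: Hg.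
lia.
Qed.

Lemma LM m : forall a, a + m.+1 < n -> sg a < sg a.+1 ->
  sg (a + m.+1) < sg (a + m) -> False.
Proof.
elim: m => [|m IH] a an l1 l2.
  rewrite addn0 addn1 in l2; lia.
have a2 : a.+2 < n by lia.
case: (ltngtP (sg a.+1) (sg a.+2)) => c.
- apply: (IH a.+1); first by lia.
  + exact: c.
  + by rewrite !addSnnS.
- have := @L1 (g a) (g a.+2) (g a.+1) (Hg (ltnW (ltnW a2))) (Hg a2) (Hg (ltnW a2)) l1 c.
  rewrite (Hw (ltnW a2)) setIC (Hw a2) => /(_ erefl erefl) e.
  by move: (Hu (ltnSn a) a2); rewrite e setIC eqxx.
- by have := sg_neq a2; rewrite c eqxx.
Qed.

Lemma LE m a : a + m.+1 < n ->
  sg a.+1 < sg a \/ sg (a + m) < sg (a + m.+1).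
Proof.
move=> an.
case: (ltngtP (sg a.+1) (sg a)) => c; first by left.
- case: (ltngtP (sg (a + m)) (sg (a + m.+1))) => c2; first by right.
  + by exfalso; apply: (LM an c c2).
  + have : (a + m).+1 < n by lia.
    by move=> /sg_neq; rewrite -addnS c2 eqxx.
- have : a.+1 < n by lia.
  by move=> /sg_neq; rewrite c eqxx.
Qed.

Lemma LMax m : forall a, a + m.+1 < n -> forall j, a < j < a + m.+1 ->
  sg j < maxn (sg a) (sg (a + m.+1)).
Proof.
elim: m => [|m IH] a an j /andP [j1 j2]; first by lia.
case: (LE an) => c.
- have := IH a.+1; rewrite addSnnS => /(_ an j).
  case: (ltnP a.+1 j) => c2.
    move=> /(_ ltac:(lia)); lia.
  move=> _; have -> : j = a.+1 by lia.
  lia.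
- have an' : a + m.+1 < n by lia.
  have e : a + m.+2 = (a + m.+1).+1 by lia.
  rewrite e in c j2 *.
  have := IH a an' j.
  case: (ltnP j (a + m.+1)) => c2.
    move=> /(_ ltac:(lia)); lia.
  move=> _; have -> : j = a + m.+1 by lia.
  lia.
Qed.

Lemma LX (x : V) m : forall a, a + m.+1 < n -> x \in g a -> x \in g (a + m.+1) ->
  forall j, a <= j <= a + m.+1 -> x \in g j.
Proof.
elim: m => [|m IH] a an xa xb j /andP [j1 j2].
  by case: (ltnP a j) => c; [have -> : j = a + 1 by lia | have -> : j = a by lia].
have an' : a + m.+1 < n by lia.
have Ha := Hg (leq_ltn_trans (leq_addr _ _) an).
have Hb := Hg an.
case: (ltngtP (sg a) (sg (a + m.+2))) => c.
-
  have lt1 : sg (a + m.+1) < sg (a + m.+2).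
    have := @LMax m.+1 a an (a + m.+1); rewrite (maxn_idPr (ltnW c)); apply; lia.
  have xb1 : x \in g (a + m.+1).
    apply: (@L2 (g (a + m.+1)) (g a) (g (a + m.+2)) x (Hg an') Ha Hb lt1 c) => //.
    have e : a + m.+2 = (a + m.+1).+1 by lia.
    by rewrite e; apply: Hw; lia.
  case: (ltnP j (a + m.+2)) => c2.
    by apply: (IH a an' xa xb1); lia.
  by have -> : j = a + m.+2 by lia.
- have lt1 : sg a.+1 < sg a.
    have := @LMax m.+1 a an a.+1; rewrite (maxn_idPl (ltnW c)); apply; lia.
  have a1n : a.+1 < n by lia.
  have xa1 : x \in g a.+1.
    apply: (@L2 (g a.+1) (g (a + m.+2)) (g a) x (Hg a1n) Hb Ha lt1 c) => //.
    by rewrite setIC; apply: Hw.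
  case: (ltnP a j) => c2.
    by apply: (IH a.+1); rewrite ?addSnnS //; lia.
  by have -> : j = a by lia.
- exfalso.
  have e := sg_inj (leq_ltn_trans (leq_addr _ _) an) an c.
  have l1 : sg a.+1 < sg a.
    have := @LMax m.+1 a an a.+1; rewrite -c maxnn; apply; lia.
  have l2 : sg (a + m.+1) < sg a.
    have := @LMax m.+1 a an (a + m.+1); rewrite -c maxnn; apply; lia.
  have a1n : a.+1 < n by lia.
  have := @L1 (g a.+1) (g (a + m.+1)) (g a) (Hg a1n) (Hg an') Ha l1 l2.
  have e2 : a + m.+2 = (a + m.+1).+1 by lia.
  have c1 : #|g a.+1 :&: g a| = d by rewrite setIC; apply: Hw.
  have c3 : #|g (a + m.+1) :&: g a| = d by rewrite e e2; apply: Hw; lia.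
  move=> /(_ c1 c3) eq.
  move: (@Hu a (a + m.+1) ltac:(lia) ltac:(lia)).
  by rewrite setIC eq -e2 -e setIC eqxx.
Qed.

End Aux.

Theorem lemma2p8 (V : finType) (X : {set {set V}}) (d : nat)
    (h k : {set V}) (f : seq {set V}) :
  stacked X d ->
  h \in X -> k \in X ->
  (forall c, codim1_face X d c -> ~~ (h :|: k \subset c)) ->
  path_between X d h k f ->
  forall i, i.+1 < size f ->
    ~~ (h \subset nth set0 f i :&: nth set0 f i.+1) /\
    ~~ (k \subset nth set0 f i :&: nth set0 f i.+1).
Proof.
move=> [_ [Hpure [s [_ [_ [siff Hst]]]]]] _ _ _ [[[_ [ffac Hwf]] Hu] [h0 [kl side]]] i ilt.
have Hs : forall F, F \in s -> #|F| = d.+1 by move=> F /siff /Hpure.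
have Hg : forall j, j < size f -> nth set0 f j \in s.
  by move=> j jn; apply/siff/ffac/mem_nth.
have Hu' : forall j l, j < l -> l.+1 < size f ->
    nth set0 f j :&: nth set0 f j.+1 != nth set0 f l :&: nth set0 f l.+1.
  move=> j l jl ln.
  have := @nth_uniq _ set0 (consec_inters f) j l.
  rewrite /consec_inters size_mkseq !nth_mkseq; try lia.
  move=> /(_ ltac:(lia) ltac:(lia) Hu) ->; lia.
have LXf := LX Hs Hst Hg Hwf Hu'.
have [s1 s2] := side ltac:(lia).
split.
- apply: contra s1 => /subsetP hs; apply/subsetP => x xh.
  have := hs x xh; rewrite inE => /andP [_ xi1].
  have x0 : x \in nth set0 f 0 by apply: (subsetP h0).
  have := LXf x i 0 ltac:(lia) x0; rewrite add0n => /(_ xi1) H.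
  by rewrite inE x0 H //; lia.
- apply: contra s2 => /subsetP hs; apply/subsetP => x xk.
  have := hs x xk; rewrite inE => /andP [xi _].
  have xl : x \in nth set0 f (size f).-1 by apply: (subsetP kl).
  have e : i + (size f - i - 2).+1 = (size f).-1 by lia.
  have := LXf x (size f - i - 2) i ltac:(lia) xi; rewrite e => /(_ xl) H.
  by rewrite inE xl H //; lia.
Qed.
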